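(* Let $u\in[0,1]$, $s\geq 1$, and for $x\in(0,1)$ define $$g_{u,s}(x)=\frac{s}{2}\log(1-ux^2)+\log\left(\frac{\operatorname{arth}(x)}{x}\right),$$ where $\operatorname{arth}(x)=\frac12\log\frac{1+x}{1-x}$ is the inverse hyperbolic tangent. Then $g_{u,s}(x)>0$ for all $x\in(0,1)$ if and only if $3su\leq 2$. *)

(* Defs.v *)
From Stdlib Require Import Reals.
Open Scope R_scope.

Definition arth (x : R) : R := / 2 * ln ((1 + x) / (1 - x)).

Definition g (u s x : R) : R := s / 2 * ln (1 - u * x ^ 2) + ln (arth x / x).

(* Main.v *)
Require Import Defs.
From Stdlib Require Import Reals Lra.
From Coquelicot Require Import Coquelicot.
Open Scope R_scope.

Definition hh (y : R) := arth y - y / sqrt (1 - 2/3 * y^2).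
Lemma d_hh c : -1 < c < 1 -> is_derive hh c
  (/ (1 - c^2) - (/ sqrt (1 - 2/3 * c^2) + 2/3 * c^2 / (sqrt (1 - 2/3 * c^2) * sqrt (1 - 2/3 * c^2) * sqrt (1 - 2/3 * c^2)))).
Proof. intros Hc. unfold hh, arth.
 replace (1 - 2/3 * c^2) with (1 + - (2/3 * (c * (c * 1)))) by ring.
 assert (Hp: 0 < 1 + - (2/3 * (c * (c * 1)))) by nra.
 assert (Hq: 0 < sqrt (1 + - (2/3 * (c * (c * 1))))) by (apply sqrt_lt_R0; auto).
 auto_derive.
- repeat split; try lra. apply Rdiv_lt_0_compat; lra.
- field. repeat split; try lra. nra.
Qed.

Lemma d_hh_pos c : 0 <= c < 1 -> 0 < / (1 - c^2) - (/ sqrt (1 - 2/3 * c^2) + 2/3 * c^2 / (sqrt (1 - 2/3 * c^2) * sqrt (1 - 2/3 * c^2) * sqrt (1 - 2/3 * c^2))) \/ c = 0.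
Proof. intros Hc.
 destruct (Req_dec c 0) as [->|Hc0]; [now right|left].
 assert (Hp: 0 < 1 - 2/3*c^2) by nra.
 pose proof (sqrt_lt_R0 _ Hp) as Hq.
 pose proof (sqrt_sqrt _ (Rlt_le _ _ Hp)) as Hqq.
 set (q := sqrt (1 - 2/3*c^2)) in *.
 replace (/ q + 2/3*c^2/(q*q*q)) with (/ (q*q*q)).
 2:{ field_simplify. all: try lra. replace (q^2) with (1-2/3*c^2) by (rewrite <- Hqq; ring). field. lra. }
 assert (H1 : 0 < 1 - c^2) by nra.
 assert (H3: 1 - c^2 < q*q*q).
 { assert ((1-c^2)^2 < (q*q*q)^2).
   { replace ((q*q*q)^2) with ((q*q)^3) by ring. rewrite Hqq.
     assert (0 < c^2) by nra. nra. }
   assert (0 < q*q*q) by (repeat apply Rmult_lt_0_compat; auto). nra. }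
 apply Rlt_Rminus. apply Rinv_lt_contravar; nra.
Qed.

Lemma mvt_le f f' a b : a <= b -> (forall c, a <= c <= b -> is_derive f c (f' c)) ->
  (forall c, a < c < b -> 0 <= f' c) -> f a <= f b.
Proof. intros Hab Hd Hp. destruct (Req_dec a b) as [->|Hne]; [lra|].
 destruct (MVT_cor2 f f' a b) as [c [E Hc]]; [lra| |].
 - intros c Hc. apply is_derive_Reals. now apply Hd.
 - specialize (Hp c Hc). nra.
Qed.

Lemma mvt_lt f f' a b : a < b -> (forall c, a <= c <= b -> is_derive f c (f' c)) ->
  (forall c, a < c < b -> 0 < f' c) -> f a < f b.
Proof. intros Hab Hd Hp.
 destruct (MVT_cor2 f f' a b) as [c [E Hc]]; [lra| |].
 - intros c Hc. apply is_derive_Reals. now apply Hd.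
 - specialize (Hp c Hc). nra.
Qed.

Lemma ln_le1 y : 0 < y -> ln y <= y - 1.
Proof. intros. pose proof (exp_ineq1_le (ln y)). rewrite exp_ln in H0; lra. Qed.

Lemma ln_mono x y : 0 < x -> x <= y -> ln x <= ln y.
Proof. intros. destruct (Req_dec x y) as [->|]; [lra|]. left; apply ln_increasing; lra. Qed.

Lemma arth0 : arth 0 = 0.
Proof. unfold arth. replace ((1+0)/(1-0)) with 1 by field. rewrite ln_1. ring. Qed.

Lemma hh_pos x : 0 < x < 1 -> 0 < hh x.
Proof. intros Hx.
 assert (H0 : hh 0 = 0).
 { unfold hh. rewrite arth0. replace (0/sqrt (1 - 2/3*0^2)) with 0; [ring|]. unfold Rdiv; ring. }
 rewrite <- H0. apply (mvt_lt hh (fun c => / (1 - c^2) - (/ sqrt (1 - 2/3 * c^2) + 2/3 * c^2 / (sqrt (1 - 2/3 * c^2) * sqrt (1 - 2/3 * c^2) * sqrt (1 - 2/3 * c^2)))) 0 x); [lra| |].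
 - intros c Hc. apply d_hh. lra.
 - intros c Hc. destruct (d_hh_pos c) as [H|H]; lra.
Qed.

Lemma arth_lb x : 0 < x < 1 -> x / sqrt (1 - 2/3*x^2) < arth x.
Proof. intros Hx. pose proof (hh_pos x Hx). unfold hh in H. lra. Qed.

Definition kk (y : R) := y + y^3 / (3 * (1 - y^2)) - arth y.
Lemma d_kk c : -1 < c < 1 -> is_derive kk c (2/3 * c^4 / (1 - c^2)^2).
Proof. intros Hc. unfold kk, arth.
 assert (0 < 1 - c^2) by nra.
 auto_derive.
- repeat split; try lra. apply Rdiv_lt_0_compat; lra.
- field. repeat split; try lra.
Qed.

Lemma arth_ub x : 0 <= x < 1 -> arth x <= x + x^3 / (3 * (1 - x^2)).
Proof. intros Hx.
 assert (kk 0 <= kk x).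
 { apply (mvt_le kk (fun c => 2/3 * c^4 / (1 - c^2)^2) 0 x); [lra| |].
   - intros c Hc. apply d_kk. lra.
   - intros c Hc. assert (0 < 1 - c^2) by nra. apply Rmult_le_pos.
     + assert (0 <= c^4) by (apply pow_le; lra). lra.
     + left. apply Rinv_0_lt_compat. nra. }
 unfold kk in H. rewrite arth0 in H. replace (0 + 0^3/(3*(1-0^2)) - 0) with 0 in H by field. lra.
Qed.

Lemma bern s t : 1 <= s -> 0 <= t -> s * t < 1 -> ln (1 - s * t) <= s * ln (1 - t).
Proof. intros Hs Ht Hst.
 assert (Ht1 : t < 1) by nra.
 set (phi := fun r => r * ln (1 - t) - ln (1 - r * t)).
 assert (phi 1 <= phi s).
 { apply (mvt_le phi (fun r => ln (1 - t) + t / (1 - r * t)) 1 s); [lra| |].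
   - intros c Hc. unfold phi. assert (0 < 1 - c * t) by nra. auto_derive.
     + lra.
     + field. lra.
   - intros c Hc. assert (0 < 1 - c * t) by nra.
     pose proof (ln_le1 (/ (1 - t))) as L. rewrite ln_Rinv in L by lra.
     assert (t / (1 - t) <= t / (1 - c * t)).
     { unfold Rdiv. apply Rmult_le_compat_l; auto. apply Rinv_le_contravar; nra. }
     assert (/ (1 - t) - 1 = t / (1 - t)) by (field; lra).
     assert (0 < / (1 - t)) by (apply Rinv_0_lt_compat; lra). lra. }
 unfold phi in H. replace (1 - 1 * t) with (1 - t) in H by ring. lra.
Qed.

Theorem lemma2p2 (u s : R) (hu : 0 <= u <= 1) (hs : 1 <= s) :
  (forall x : R, 0 < x < 1 -> 0 < g u s x) <-> 3 * s * u <= 2.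
Proof. split.
- intros H. destruct (Rle_lt_dec (3 * s * u) 2) as [|Hlt]; [auto|exfalso].
  set (v := s * u). assert (Hv : 2/3 < v) by (unfold v; lra).
  assert (HX : 0 < 1 - 2 / (3 * v)).
  { assert (2 / (3 * v) < 1). { apply (Rmult_lt_reg_r (3*v)); [lra|]. field_simplify; lra. } lra. }
  set (x := sqrt (1 - 2 / (3 * v))).
  assert (Hxp : 0 < x) by (apply sqrt_lt_R0; auto).
  assert (Hxx : x ^ 2 = 1 - 2 / (3 * v)) by (unfold x; simpl; rewrite Rmult_1_r; apply sqrt_sqrt; lra).
  assert (HX1 : 0 < 2 / (3 * v)) by (apply Rdiv_lt_0_compat; lra).
  assert (Hx1 : x < 1) by nra.
  specialize (H x (conj Hxp Hx1)). unfold g in H.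
  pose proof (arth_lb x (conj Hxp Hx1)) as Lb.
  assert (Hp: 0 < 1 - 2/3*x^2) by nra.
  pose proof (sqrt_lt_R0 _ Hp) as Hq.
  assert (Ha : 0 < arth x). { assert (0 < x / sqrt (1 - 2/3*x^2)) by (apply Rdiv_lt_0_compat; auto). lra. }
  pose proof (arth_ub x (conj (Rlt_le _ _ Hxp) Hx1)) as Ub.
  assert (HA : 0 < arth x / x) by (apply Rdiv_lt_0_compat; auto).
  pose proof (ln_le1 _ HA) as L1.
  assert (Hux : 0 < 1 - u * x ^ 2) by nra.
  pose proof (ln_le1 _ Hux) as L2.
  assert (E1 : arth x / x - 1 <= x ^ 2 / (3 * (1 - x ^ 2))).
  { apply (Rmult_le_reg_r x); auto. unfold Rdiv at 1. rewrite Rmult_minus_distr_r, Rmult_assoc, Rinv_l by lra.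
    replace (x ^ 2 / (3 * (1 - x ^ 2)) * x) with (x ^ 3 / (3 * (1 - x ^ 2))) by (field; lra). lra. }
  assert (E2 : x ^ 2 / (3 * (1 - x ^ 2)) = v * x ^ 2 / 2).
  { rewrite Hxx. field. lra. }
  assert (E3 : s / 2 * ln (1 - u * x ^ 2) <= s / 2 * (- (u * x ^ 2))).
  { apply Rmult_le_compat_l; lra. }
  assert (E4 : s / 2 * (- (u * x ^ 2)) = - (v * x ^ 2 / 2)) by (unfold v; field).
  lra.
- intros H x Hx.
  assert (Hx2 : 0 < x ^ 2 < 1) by (split; nra).
  assert (Hsu : s * u * x ^ 2 <= 2/3 * x ^ 2) by nra.
  assert (Hp: 0 < 1 - 2/3*x^2) by nra.
  pose proof (bern s (u * x ^ 2) hs ltac:(nra) ltac:(nra)) as B.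
  assert (B2 : ln (1 - 2/3 * x^2) <= ln (1 - s * (u * x ^ 2))).
  { apply ln_mono; nra. }
  pose proof (arth_lb x Hx) as Lb.
  pose proof (sqrt_lt_R0 _ Hp) as Hq.
  pose proof (sqrt_sqrt _ (Rlt_le _ _ Hp)) as Hqq.
  set (q := sqrt (1 - 2/3*x^2)) in *.
  assert (HA : / q < arth x / x).
  { apply (Rmult_lt_reg_r x); [lra|]. unfold Rdiv. rewrite Rmult_assoc, Rinv_l by lra.
    replace (/ q * x) with (x / q) by (unfold Rdiv; ring). lra. }
  assert (L : ln (/ q) < ln (arth x / x)) by (apply ln_increasing; auto; apply Rinv_0_lt_compat; auto).
  rewrite ln_Rinv in L by auto.
  rewrite <- Hqq, ln_mult in B2 by auto.
  unfold g. nra.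
Qed.
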